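(* Fix $n$ and a probability vector $p\in\mathbb R^I$ with positive entries. If $\vartheta^n_p<0$, then the state process $X^n$ of the $n$-th system is transient under every work-conserving stationary Markov scheduling policy. If $\vartheta^n_p=0$, then $X^n$ is not positive recurrent under any work-conserving stationary Markov scheduling policy.
   Context: Network: $\mathcal I=\{1,\dots,I\}$, $\mathcal J=\{1,\dots,J\}$, edges $\mathcal E\subset\mathcal I\times\mathcal J$ with the bipartite graph $\mathcal G=(\mathcal I\cup\mathcal J,\mathcal E)$ a tree; $i\sim j$ iff $(i,j)\in\mathcal E$, $\mathcal J(i)=\{j:i\sim j\}$, $\mathcal I(j)=\{i:i\sim j\}$; $\mathbb R^{\mathcal G}$ (resp. $\mathbb Z^{\mathcal G}_+$) denotes arrays in $\mathbb R^{I\times J}$ (resp. with nonnegative integer entries) vanishing off $\mathcal E$. For each $n\in\mathbb N$: $\lambda^n_i>0$, $\mu^n_{ij}>0$, $N^n_j\in\mathbb N$, with $\lambda^n_i/n\to\lambda_i>0$, $N^n_j/n\to\nu_j>0$, $\mu^n_{ij}\to\mu_{ij}>0$, $\hat\lambda^n_i:=(\lambda^n_i-n\lambda_i)/\sqrt n$, $\hat\mu^n_{ij}:=\sqrt n(\mu^n_{ij}-\mu_{ij})$, $\hat\nu^n_j:=\sqrt n(N^n_j/n-\nu_j)$ convergent to real limits. Complete resource pooling: the LP ''minimize $\max_j\sum_i\xi_{ij}$ over nonnegative $\xi\in\mathbb R^{\mathcal G}$ subject to $\sum_j\mu_{ij}\nu_j\xi_{ij}=\lambda_i$ $\forall i$''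 has a unique solution $\xi^*$, with $\sum_i\xi^*_{ij}=1$ $\forall j$ and $\xi^*_{ij}>0$ for $i\sim j$; $z^*_{ij}:=\xi^*_{ij}\nu_j$; $\theta^n_j:=\hat\nu^n_j+\sum_{i\in\mathcal I(j)}(\hat\mu^n_{ij}/\mu^n_{ij})z^*_{ij}$. $\vartheta^n_p$: for a probability vector $p$ with positive entries, the (unique) optimal value of: maximize $\vartheta$ over $(\vartheta,\kappa)\in\mathbb R\times\mathbb R^{\mathcal G}$ subject to $\hat\lambda^n_i\le\sum_{j\in\mathcal J(i)}\mu^n_{ij}\kappa_{ij}-\vartheta p_i$ $\forall i$ and $\sum_{i\in\mathcal I(j)}\kappa_{ij}=\theta^n_j$ $\forall j$. The $n$-th system (no abandonment, infinite buffers): for $x\in\mathbb Z^I_+$ (numbers of customers of each class in system), the work-conserving action set is $\mathcal Z^n(x)=\{z\in\mathbb Z^{\mathcal G}_+: q_i\ge0,\ y_j\ge0,\ q_i\wedge y_j=0\ \forall(i,j)\in\mathcal E\}$, where $q_i=x_i-\sum_jz_{ij}$ and $y_j=N^n_j-\sum_iz_{ij}$. A work-conserving stationary Markov scheduling policy is a map $z:\mathbb Z^I_+\to\mathbb Z^{\mathcal G}_+$ with $z(x)\in\mathcal Z^n(x)$ for all $x$; under it, $X^n$ is the continuous-time Markov chain on $\mathbb Z^I_+$ with generator $\mathcal L^n_zf(x)=\sum_{i}\big(\lambda^n_i(f(x+e_i)-f(x))+\sum_{j\in\mathcal J(i)}\mu^n_{ij}z_{ij}(x)(f(x-e_i)-f(x))\big)$,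 $e_i$ the $i$-th unit vector. *)

(* Defs.v *)
From mathcomp Require Import all_boot all_order all_algebra.
From mathcomp Require Import all_classical all_reals all_analysis.
Set Implicit Arguments. Unset Strict Implicit. Unset Printing Implicit Defensive.
Import Order.TTheory GRing.Theory Num.Theory.
Local Open Scope ring_scope.
Local Open Scope classical_set_scope.

Definition vadj (I J : nat) (E : {set 'I_I * 'I_J}) : rel ('I_I + 'I_J) :=
  fun u v => match u, v with
             | inl i, inr j => (i, j) \in E
             | inr j, inl i => (i, j) \in E
             | _, _ => false
             end.

Definition is_tree (I J : nat) (E : {set 'I_I * 'I_J}) : Prop :=
  (forall u v, connect (vadj E) u v) /\
  (forall c : seq ('I_I + 'I_J), uniq c -> (3 <= size c)%N -> ~~ cycle (vadj E) c).

Definition crp_feasible (R : realType) (I J : nat) (E : {set 'I_I * 'I_J})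
  (lamL : 'I_I -> R) (muL : 'I_I -> 'I_J -> R) (nuL : 'I_J -> R)
  (xi : 'I_I -> 'I_J -> R) : Prop :=
  (forall i j, (i, j) \notin E -> xi i j = 0) /\
  (forall i j, 0 <= xi i j) /\
  (forall i, \sum_(j | (i, j) \in E) muL i j * nuL j * xi i j = lamL i).

Definition crp_obj (R : realType) (I J : nat) (E : {set 'I_I * 'I_J})
  (xi : 'I_I -> 'I_J -> R) : R :=
  \big[Num.max/0]_(j < J) \sum_(i | (i, j) \in E) xi i j.

Definition CRP (R : realType) (I J : nat) (E : {set 'I_I * 'I_J})
  (lamL : 'I_I -> R) (muL : 'I_I -> 'I_J -> R) (nuL : 'I_J -> R)
  (xi : 'I_I -> 'I_J -> R) : Prop :=
  [/\ crp_feasible E lamL muL nuL xi,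
      (forall xi', crp_feasible E lamL muL nuL xi' -> crp_obj E xi <= crp_obj E xi'),
      (forall xi', crp_feasible E lamL muL nuL xi' -> crp_obj E xi' <= crp_obj E xi ->
                   forall i j, xi' i j = xi i j),
      (forall j, \sum_(i | (i, j) \in E) xi i j = 1) &
      (forall i j, (i, j) \in E -> 0 < xi i j)].

Definition lamhat (R : realType) (I : nat) (lam : nat -> 'I_I -> R) (lamL : 'I_I -> R)
  (m : nat) (i : 'I_I) : R := (lam m i - m%:R * lamL i) / Num.sqrt (m%:R).

Definition muhat (R : realType) (I J : nat) (mu : nat -> 'I_I -> 'I_J -> R)
  (muL : 'I_I -> 'I_J -> R) (m : nat) (i : 'I_I) (j : 'I_J) : R :=
  Num.sqrt (m%:R) * (mu m i j - muL i j).

Definition nuhat (R : realType) (J : nat) (N : nat -> 'I_J -> nat) (nuL : 'I_J -> R)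
  (m : nat) (j : 'I_J) : R := Num.sqrt (m%:R) * ((N m j)%:R / m%:R - nuL j).

(* theta^n_j, with z*_{ij} = xi*_{ij} nu_j *)
Definition thetan (R : realType) (I J : nat) (E : {set 'I_I * 'I_J})
  (mu : nat -> 'I_I -> 'I_J -> R) (muL : 'I_I -> 'I_J -> R)
  (N : nat -> 'I_J -> nat) (nuL : 'I_J -> R) (xi : 'I_I -> 'I_J -> R)
  (m : nat) (j : 'I_J) : R :=
  nuhat N nuL m j + \sum_(i | (i, j) \in E) (muhat mu muL m i j / mu m i j) * (xi i j * nuL j).

Definition vartheta_feasible (R : realType) (I J : nat) (E : {set 'I_I * 'I_J})
  (lh : 'I_I -> R) (mun : 'I_I -> 'I_J -> R) (th : 'I_J -> R) (p : 'I_I -> R)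
  (v : R) (kappa : 'I_I -> 'I_J -> R) : Prop :=
  [/\ (forall i j, (i, j) \notin E -> kappa i j = 0),
      (forall i, lh i <= \sum_(j | (i, j) \in E) mun i j * kappa i j - v * p i) &
      (forall j, \sum_(i | (i, j) \in E) kappa i j = th j)].

Definition is_vartheta (R : realType) (I J : nat) (E : {set 'I_I * 'I_J})
  (lh : 'I_I -> R) (mun : 'I_I -> 'I_J -> R) (th : 'I_J -> R) (p : 'I_I -> R)
  (v : R) : Prop :=
  (exists kappa, vartheta_feasible E lh mun th p v kappa) /\
  (forall v' kappa, vartheta_feasible E lh mun th p v' kappa -> v' <= v).

Definition state (I : nat) := {ffun 'I_I -> nat}.

Definition up (I : nat) (x : state I) (i : 'I_I) : state I :=
  [ffun k => (x k + (k == i))%N].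
Definition down (I : nat) (x : state I) (i : 'I_I) : state I :=
  [ffun k => (x k - (k == i))%N].

Definition wc_action (I J : nat) (E : {set 'I_I * 'I_J}) (Nn : 'I_J -> nat)
  (x : state I) (z : 'I_I -> 'I_J -> nat) : Prop :=
  [/\ (forall i j, (i, j) \notin E -> z i j = 0%N),
      (forall i, (\sum_(j < J) z i j <= x i)%N),
      (forall j, (\sum_(i < I) z i j <= Nn j)%N) &
      (forall i j, (i, j) \in E ->
         (x i - \sum_(j' < J) z i j')%N = 0%N \/ (Nn j - \sum_(i' < I) z i' j)%N = 0%N)].

Definition wc_policy (I J : nat) (E : {set 'I_I * 'I_J}) (Nn : 'I_J -> nat)
  (z : state I -> 'I_I -> 'I_J -> nat) : Prop :=
  forall x, wc_action E Nn x (z x).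

(* ---------- CTMC on Z_+^I with jumps +e_i at rate lam i and -e_i at rate d x i ---------- *)

Section CTMC.
Variables (R : realType) (I : nat) (lam : 'I_I -> R) (d : state I -> 'I_I -> R).

Definition qtot (x : state I) : R := \sum_(i < I) (lam i + d x i).

(* one step of the embedded jump chain applied to f *)
Definition step_avg (f : state I -> R) (x : state I) : R :=
  \sum_(i < I) ((lam i / qtot x) * f (up x i) + (d x i / qtot x) * f (down x i)).

(* k-th iterate for the probability of ever hitting x (at a time >= 0) from y *)
Fixpoint hitp (x : state I) (k : nat) (y : state I) : R :=
  match k with
  | 0 => 0
  | k'.+1 => if y == x then 1 else step_avg (hitp x k') y
  end.

(* k-th iterate for the expected (continuous) time to hit x from y *)
Fixpoint hitt (x : state I) (k : nat) (y : state I) : R :=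
  match k with
  | 0 => 0
  | k'.+1 => if y == x then 0 else (qtot y)^-1 + step_avg (hitt x k') y
  end.

(* probability of returning to x (after the first jump) *)
Definition return_prob (x : state I) : \bar R :=
  ereal_sup (range (fun k => (step_avg (hitp x k) x)%:E)).

(* mean return time E_x[T_x], T_x = inf{t >= J_1 : X_t = x} *)
Definition mean_return (x : state I) : \bar R :=
  ereal_sup (range (fun k => ((qtot x)^-1 + step_avg (hitt x k) x)%:E)).

Definition ctmc_transient : Prop := forall x, (return_prob x < 1%:E)%E.
Definition ctmc_pos_recurrent : Prop := forall x, (mean_return x < +oo)%E.
End CTMC.

Definition dep_rate (R : realType) (I J : nat) (E : {set 'I_I * 'I_J})
  (mun : 'I_I -> 'I_J -> R) (z : state I -> 'I_I -> 'I_J -> nat)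
  (x : state I) (i : 'I_I) : R :=
  \sum_(j | (i, j) \in E) mun i j * (z x i j)%:R.

(* Main.v *)
Require Import Defs.
From mathcomp Require Import all_boot all_order all_algebra.
From mathcomp Require Import all_classical all_reals all_analysis.
From mathcomp Require Import zify ring lra.
Set Implicit Arguments. Unset Strict Implicit. Unset Printing Implicit Defensive.
Import Order.TTheory GRing.Theory Num.Theory numFieldNormedType.Exports.
Local Open Scope ring_scope.

Section Walks.
Variables (F : fieldType) (V : finType) (e : rel V) (g : V -> V -> F).
Hypothesis esym : symmetric e.
Hypothesis eirr : forall a, ~~ e a a.
Hypothesis ginv : forall a b, e a b -> g a b * g b a = 1.
Hypothesis acyc : forall c : seq V, uniq c -> (3 <= size c)%N -> ~~ cycle e c.

Fixpoint wp (a : V) (s : seq V) : F :=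
  if s is b :: s' then g a b * wp b s' else 1.

Lemma wp_cat a s1 s2 : wp a (s1 ++ s2) = wp a s1 * wp (last a s1) s2.
Proof. by elim: s1 a => [|b s IH] a /=; rewrite ?mul1r // IH mulrA. Qed.

Lemma notuniq_split (s : seq V) : ~~ uniq s ->
  exists s1 x s2 s3, s = s1 ++ x :: s2 ++ x :: s3.
Proof.
elim: s => [|y t IH] //=; rewrite negb_and negbK; case/orP.
  by case/splitPr=> t1 t2; exists [::], y, t1, t2.
by move/IH=> [s1 [x [s2 [s3 ->]]]]; exists (y :: s1), x, s2, s3.
Qed.

Definition W (l : seq V) := if l is h :: tl then wp h tl else 1.
Definition fp (l : seq V) := if l is h :: tl then path e h tl else true.
Lemma Wcat : forall l1 y l2, W (l1 ++ y :: l2) = W (rcons l1 y) * W (y :: l2).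
Proof.
  move=> [|h tl] y l2 /=; first by rewrite mul1r.
  by rewrite -cat_rcons wp_cat last_rcons.
Qed.
Lemma fpcat : forall l1 y l2, fp (l1 ++ y :: l2) = fp (rcons l1 y) && fp (y :: l2).
Proof.
  move=> [|h tl] y l2 /=; first by [].
  by rewrite -cat_rcons cat_path last_rcons.
Qed.

Lemma closed_walk n : forall a t, (size t <= n)%N -> path e a t -> last a t = a -> wp a t = 1.
Proof.
elim: n => [|n IH] a t.
  by rewrite leqn0 => /nilP ->.
case/lastP: t => [|t' x] //; rewrite size_rcons last_rcons => Hs Hp Hx.
subst x.
case Hu: (uniq (a :: t')).
  move: Hs Hp Hu; case: t' => [|b [|c t'']] /= Hs Hp Hu.
  - by move: Hp; rewrite andbT (negbTE (eirr a)).
  - by move: Hp => /and3P [Hab Hba _]; rewrite mulr1 ginv.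
  - exfalso; move: (@acyc [:: a, b, c & t''] Hu isT) => /=.
    by rewrite Hp.
have := notuniq_split (negbT Hu) => -[s1 [x [s2 [s3 Hc]]]].
have Hfull : a :: rcons t' a = s1 ++ x :: s2 ++ x :: rcons s3 a.
  by rewrite -rcons_cons Hc rcons_cat /= rcons_cat.
have Wfull : wp a (rcons t' a) = W (a :: rcons t' a) by [].
have fpfull : fp (a :: rcons t' a) by [].
clear Hc Hu.
rewrite Wfull Hfull Wcat (Wcat (x :: s2)).
move: fpfull; rewrite Hfull fpcat (fpcat (x :: s2)) => /and3P [P1 P2 P3].
have Hsz : (size (s1 ++ x :: s2 ++ x :: rcons s3 a) <= n.+2)%N.
  by rewrite -Hfull /= size_rcons ltnS.
rewrite !size_cat /= size_cat /= size_rcons in Hsz.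
have Hin : W (rcons (x :: s2) x) = 1.
  rewrite /= IH //; last by rewrite last_rcons.
    by rewrite size_rcons; lia.
have Hout : W (rcons s1 x) * W (x :: rcons s3 a) = 1.
  rewrite -Wcat.
  have Hh : head a (s1 ++ x :: rcons s3 a) = a.
    move: Hfull P1 Hsz; case: s1 => [|h s1'] /=; by case=> ->.
  case Hl: (s1 ++ x :: rcons s3 a) => [|h tl]; first by case: (s1) Hl.
  rewrite Hl /= in Hh; subst h => /=.
  apply: IH.
  - have : size (s1 ++ x :: rcons s3 a) = (size tl).+1 by rewrite Hl.
    rewrite size_cat /= size_rcons => Hst.
    lia.
  - have := fpcat s1 x (rcons s3 a); rewrite Hl /= => ->; exact/andP.
  - have : last a (a :: tl) = last a (s1 ++ x :: rcons s3 a) by rewrite Hl.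
    by rewrite last_cat /= last_rcons.
by rewrite Hin mul1r Hout.
Qed.
End Walks.

Section Potential.
Variables (F : numFieldType) (V : finType) (e : rel V) (g : V -> V -> F).
Hypothesis esym : symmetric e.
Hypothesis eirr : forall a, ~~ e a a.
Hypothesis ginv : forall a b, e a b -> g a b * g b a = 1.
Hypothesis gpos : forall a b, e a b -> 0 < g a b.
Hypothesis acyc : forall c : seq V, uniq c -> (3 <= size c)%N -> ~~ cycle e c.
Hypothesis conn : forall u v, connect e u v.

Lemma wp_pos a s : path e a s -> 0 < wp g a s.
Proof.
elim: s a => [|b s IH] a /=; first by rewrite ltr01.
by case/andP=> Hab Hp; rewrite mulr_gt0 ?gpos ?IH.
Qed.

Lemma potential_exists (r : V) :
  exists Phi : V -> F, (forall a, 0 < Phi a) /\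
     (forall a b, e a b -> Phi b = Phi a * g a b).
Proof.
have : forall v, exists P : seq V, path e r P && (last r P == v).
  by move=> v; case/connectP: (conn r v) => P H1 H2; exists P; rewrite H1 H2 eqxx.
case/fin_all_exists => P HP.
exists (fun v => wp g r (P v)); split.
  by move=> a; apply: wp_pos; case/andP: (HP a).
move=> a b Hab.
case/andP: (HP a) => Hpa /eqP Hla; case/andP: (HP b) => Hpb /eqP Hlb.
set Q := rev (belast r (P b)).
have HQ : path e b Q.
  rewrite /Q; have := rev_path e r (P b); rewrite Hlb => ->.
  by rewrite (@eq_path _ _ e) // => x y /=; rewrite esym.
have HlQ : last b Q = r.
  rewrite /Q; move: Hlb; case: (P b) => [|y s] /=; first by move=> ->.
  by rewrite rev_cons last_rcons.
have C1 : wp g r (P b ++ Q) = 1.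
  apply: (@closed_walk _ _ e g eirr ginv acyc (size (P b ++ Q))) => //.
    by rewrite cat_path Hpb Hlb HQ.
  by rewrite last_cat Hlb.
have C2 : wp g r (P a ++ b :: Q) = 1.
  apply: (@closed_walk _ _ e g eirr ginv acyc (size (P a ++ b :: Q))) => //.
    by rewrite cat_path Hpa Hla /= Hab HQ.
  by rewrite last_cat Hla /= HlQ.
rewrite wp_cat Hlb in C1; rewrite wp_cat Hla /= in C2.
have Hq : wp g b Q != 0 by rewrite gt_eqF ?wp_pos.
apply: (mulIf Hq); rewrite C1 -C2 mulrA //.
Qed.
End Potential.

Lemma splitL m n (i : 'I_m) : fintype.split (lshift n i) = inl i.
Proof. exact: (unsplitK (inl _ i)). Qed.
Lemma splitR m n (i : 'I_n) : fintype.split (rshift m i) = inr i.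
Proof. exact: (unsplitK (inr _ i)). Qed.

Section LinAlg.
Variables (F : fieldType) (I J : nat) (E : {set 'I_I * 'I_J}).
Variables (mu : 'I_I -> 'I_J -> F) (w : 'I_I -> F) (u : 'I_J -> F).
Hypothesis mu_nz : forall i j, (i, j) \in E -> mu i j != 0.
Hypothesis w_nz : forall i, w i != 0.
Hypothesis u_nz : forall j, u j != 0.
Hypothesis wu : forall i j, (i, j) \in E -> w i * mu i j = u j.
Hypothesis conn : forall a b, connect (vadj E) a b.
Variable i0 : 'I_I.

Local Notation T := ('I_I * 'I_J)%type.
Local Notation m := #|{: T}|.

Definition vec (f : 'I_I -> F) (g : 'I_J -> F) : 'rV[F]_(I + J) :=
  \row_k (match fintype.split k with inl i => f i | inr j => g j end).

Definition cvec := vec w (fun j => - u j).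

Definition Amx : 'M[F]_(m, I + J) :=
  \matrix_(e, k) (if enum_val e \in E then
      (match fintype.split k with inl i => (i == (enum_val e).1)%:R * mu (enum_val e).1 (enum_val e).2
                        | inr j => (j == (enum_val e).2)%:R end) else 0).

Lemma sum_col (G : 'I_(I + J) -> F) :
  \sum_k G k = \sum_i G (lshift J i) + \sum_j G (rshift I j).
Proof. by rewrite big_split_ord. Qed.

Lemma sum_ind_l (i : 'I_I) (G : 'I_I -> F) : \sum_i' (i' == i)%:R * G i' = G i.
Proof.
rewrite (bigD1 i) //= eqxx mul1r big1 ?addr0 // => k /negbTE ->; by rewrite mul0r.
Qed.
Lemma sum_ind_r (j : 'I_J) (G : 'I_J -> F) : \sum_j' (j' == j)%:R * G j' = G j.
Proof.
rewrite (bigD1 j) //= eqxx mul1r big1 ?addr0 // => k /negbTE ->; by rewrite mul0r.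
Qed.

Lemma sum_T (G : 'I_#|{: T}| -> F) :
  \sum_e G e = \sum_i \sum_j G (enum_rank (i, j)).
Proof.
rewrite (reindex (@enum_rank _)) /=; last by apply: onW_bij; exact: enum_rank_bij.
by rewrite pair_bigA; apply: eq_bigr => -[].
Qed.

Definition vidx (v : 'I_I + 'I_J) : 'I_(I + J) :=
  match v with inl i => lshift J i | inr j => rshift I j end.

Lemma ker_sub : (kermx Amx^T <= cvec)%MS.
Proof.
apply/row_subP => k.
have : row k (kermx Amx^T) *m Amx^T = 0 by rewrite -row_mul mulmx_ker row0.
move: (row k (kermx Amx^T)) => r Hr.
have Hedge : forall i j, (i, j) \in E ->
    mu i j * r 0 (lshift J i) + r 0 (rshift I j) = 0.
  move=> i j Hij.
  move/rowP: Hr => /(_ (enum_rank (i, j))).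
  rewrite !mxE sum_col => <-.
  rewrite (eq_bigr (fun i' => (i' == i)%:R * (mu i j * r 0 (lshift J i')))); last first.
    by move=> i' _; rewrite !mxE enum_rankK Hij splitL /=; ring.
  rewrite sum_ind_l; congr (_ + _).
  rewrite (eq_bigr (fun j' => (j' == j)%:R * r 0 (rshift I j'))); last first.
    by move=> j' _; rewrite !mxE enum_rankK Hij splitR /=; ring.
  by rewrite sum_ind_r.
pose c v := cvec 0 (vidx v).
pose rho v := r 0 (vidx v) / c v.
have Hc : forall v, c v != 0.
  by case=> [i|j]; rewrite /c /cvec /vec mxE /= ?splitL ?splitR ?oppr_eq0.
have Hrho : forall a b, vadj E a b -> rho a = rho b.
  have key : forall i j, (i, j) \in E -> rho (inl i) = rho (inr j).
    move=> i j Hij; rewrite /rho /c /cvec /vec !mxE /= splitL splitR.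
    have -> : r 0 (rshift I j) = - (mu i j * r 0 (lshift J i)).
      by apply/eqP; rewrite -addr_eq0 addrC Hedge.
    rewrite -(wu Hij); field.
    by rewrite oppr_eq0 mulf_neq0 ?w_nz ?mu_nz.
  by case=> [i|j] [i'|j'] //= H; [apply: key | symmetry; apply: key].
have Hconst : forall v, rho v = rho (inl i0).
  move=> v; case/connectP: (conn (inl i0) v) => s Hs ->.
  elim: s (inl i0) Hs => [|b s IH] a //= /andP [Hab Hs].
  by rewrite IH // (Hrho _ _ Hab).
apply/sub_rVP; exists (rho (inl i0)).
apply/rowP => k'; rewrite mxE.
have -> : k' = vidx (fintype.split k') by rewrite -{1}(splitK k'); case: (fintype.split k').
rewrite -(Hconst (fintype.split k')) /rho -/(c (fintype.split k')) mulfVK //.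
Qed.

Lemma cvec_nz : cvec != 0.
Proof.
apply/eqP => /rowP /(_ (lshift J i0)); rewrite !mxE splitL => /eqP.
by rewrite (negbTE (w_nz i0)).
Qed.

Lemma A_sub : (Amx <= kermx cvec^T)%MS.
Proof.
apply/sub_kermxP; apply/matrixP => e k; rewrite !mxE sum_col.
case He: (enum_val e \in E); last first.
  by rewrite !big1 ?addr0 // => x _; rewrite !mxE He mul0r.
rewrite (eq_bigr (fun i' => (i' == (enum_val e).1)%:R * (mu (enum_val e).1 (enum_val e).2 * w i'))); last first.
  by move=> i' _; rewrite !mxE He splitL mulrA.
rewrite sum_ind_l.
rewrite (eq_bigr (fun j' => (j' == (enum_val e).2)%:R * (- u j'))); last first.
  by move=> j' _; rewrite !mxE He splitR.
rewrite sum_ind_r mulrC.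
have : (enum_val e).1 \in 'I_I by [].
case: (enum_val e) He => i j He _ /=.
by rewrite wu // subrr.
Qed.

Lemma solve_tree (b : 'I_I -> F) (N : 'I_J -> F) :
  \sum_i w i * b i = \sum_j u j * N j ->
  exists z : 'I_I -> 'I_J -> F,
    (forall i, \sum_(j | (i, j) \in E) mu i j * z i j = b i) /\
    (forall j, \sum_(i | (i, j) \in E) z i j = N j).
Proof.
move=> Hbal.
set K := kermx cvec^T.
have rK : \rank K = (I + J - 1)%N.
  by rewrite /K mxrank_ker mxrank_tr rank_rV cvec_nz.
have rA : (I + J - 1 <= \rank Amx)%N.
  have := mxrankS ker_sub; rewrite mxrank_ker mxrank_tr rank_rV cvec_nz.
  lia.
have KA : (K <= Amx)%MS.
  have := mxrank_leqif_sup A_sub; rewrite -/K => -[_ <-].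
  by rewrite eqn_leq (mxrankS A_sub) rK rA.
have tK : (vec b N <= K)%MS.
  apply/sub_kermxP; apply/matrixP => x y; rewrite !mxE sum_col.
  rewrite (eq_bigr (fun i => w i * b i)); last first.
    by move=> i _; rewrite !mxE splitL mulrC.
  rewrite (eq_bigr (fun j => - (u j * N j))); last first.
    by move=> j _; rewrite !mxE splitR mulrN mulrC.
  by rewrite sumrN Hbal subrr.
have /submxP [D HD] := submx_trans tK KA.
exists (fun i j => D 0 (enum_rank (i, j))); split.
- move=> i; move/rowP: HD => /(_ (lshift J i)).
  rewrite /vec !mxE splitL => ->.
  rewrite sum_T (bigD1 i) //= [X in _ = _ + X]big1 ?addr0; last first.
    move=> i' /negbTE Hi'; apply: big1 => j _; rewrite !mxE enum_rankK /=.
    by case: ((i', j) \in E); rewrite ?mulr0 // splitL eq_sym Hi' mul0r mulr0.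
  rewrite big_mkcond /=; apply: eq_bigr => j _; rewrite !mxE enum_rankK /=.
  by case: ((i, j) \in E); rewrite ?mulr0 // splitL eqxx mul1r mulrC.
- move=> j; move/rowP: HD => /(_ (rshift I j)).
  rewrite /vec !mxE splitR => ->.
  rewrite sum_T exchange_big (bigD1 j) //= [X in _ = _ + X]big1 ?addr0; last first.
    move=> j' /negbTE Hj'; apply: big1 => i _; rewrite !mxE enum_rankK /=.
    by case: ((i, j') \in E); rewrite ?mulr0 // splitR eq_sym Hj' mulr0.
  rewrite big_mkcond /=; apply: eq_bigr => i _; rewrite !mxE enum_rankK /=.
  by case: ((i, j) \in E); rewrite ?mulr0 // splitR eqxx mulr1.
Qed.
End LinAlg.

Local Open Scope classical_set_scope.

Section CT.
Variables (R : realType) (I : nat) (lam : 'I_I -> R) (d : state I -> 'I_I -> R).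
Hypothesis lam_gt0 : forall i, 0 < lam i.
Hypothesis d_ge0 : forall x i, 0 <= d x i.
Hypothesis d0 : forall (x : state I) i, x i = 0%N -> d x i = 0.
Variable i0 : 'I_I.

Local Notation q := (qtot lam d).
Local Notation sa := (step_avg lam d).

Lemma qtot_gt0 x : 0 < q x.
Proof.
rewrite /qtot (bigD1 i0) //=.
have h1 : 0 < lam i0 + d x i0 by have := lam_gt0 i0; have := d_ge0 x i0; lra.
have h2 : 0 <= \sum_(i | i != i0) (lam i + d x i).
  by apply: sumr_ge0 => i _; have := lam_gt0 i; have := d_ge0 x i; lra.
lra.
Qed.

Lemma sa_lin (f g : state I -> R) a b x :
  sa (fun y => a * f y + b * g y) x = a * sa f x + b * sa g x.
Proof.
rewrite /step_avg !mulr_sumr -big_split /=; apply: eq_bigr => i _; ring.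
Qed.

Lemma sa_scale (f : state I -> R) a x : sa (fun y => a * f y) x = a * sa f x.
Proof.
rewrite /step_avg !mulr_sumr /=; apply: eq_bigr => i _; ring.
Qed.

Lemma sa_const c x : sa (fun _ => c) x = c.
Proof.
rewrite /step_avg (eq_bigr (fun i => c / q x * (lam i + d x i))); last first.
  by move=> i _; ring.
rewrite -mulr_sumr -/(q x); have := qtot_gt0 x => hq.
by field; rewrite gt_eqF.
Qed.

Lemma sa_le_loc (f g : state I -> R) x :
  (forall i, f (Defs.up x i) <= g (Defs.up x i)) -> (forall i, f (Defs.down x i) <= g (Defs.down x i)) ->
  sa f x <= sa g x.
Proof.
move=> Hu Hd; rewrite /step_avg; apply: ler_sum => i _.
have hq := qtot_gt0 x.
apply: lerD.
  by apply: ler_wpM2l (Hu i); apply: divr_ge0; apply: ltW.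
by apply: ler_wpM2l (Hd i); apply: divr_ge0 => //; exact: ltW.
Qed.

Lemma sa_le (f g : state I -> R) x : (forall y, f y <= g y) -> sa f x <= sa g x.
Proof. by move=> H; apply: sa_le_loc. Qed.

Lemma up_down (x : state I) i : (0 < x i)%N -> Defs.up (Defs.down x i) i = x.
Proof.
move=> Hx; apply/ffunP => k; rewrite !ffunE.
by case: eqP => [->|_]; rewrite ?addn0 ?subn0 // subnK.
Qed.

Lemma transient_crit (a : 'I_I -> R) : (forall i, 0 < a i) ->
  (forall x, \sum_i (lam i * a i + d x i / a i) < q x) -> ctmc_transient lam d.
Proof.
move=> a_gt0 Hdrift.
pose f (y : state I) := \prod_i a i ^+ y i.
have f_gt0 : forall y, 0 < f y by move=> y; apply: prodr_gt0 => i _; apply: exprn_gt0.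
have fup : forall y i, f (Defs.up y i) = f y * a i.
  move=> y i; rewrite /f (eq_bigr (fun k => a k ^+ y k * a k ^+ (k == i))); last first.
    by move=> k _; rewrite ffunE exprD.
  rewrite big_split /=; congr (_ * _).
  rewrite (bigD1 i) //= eqxx expr1 big1 ?mulr1 // => k /negbTE ->; exact: expr0.
have fdown : forall y i, d y i * f (Defs.down y i) = d y i * (f y / a i).
  move=> y i; case Hy: (y i) => [|yi]; first by rewrite d0 // !mul0r.
  congr (_ * _); have Hp : (0 < y i)%N by rewrite Hy.
  have := fup (Defs.down y i) i; rewrite up_down // => ->.
  by rewrite mulfK // gt_eqF.
have sa_f : forall y, sa f y < f y.
  move=> y; rewrite /step_avg.
  rewrite (eq_bigr (fun i => f y / q y * (lam i * a i + d y i / a i))); last first.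
    move=> i _; rewrite fup [d y i / q y * _]mulrAC fdown; ring.
  rewrite -mulr_sumr; have hq := qtot_gt0 y.
  apply: (@lt_le_trans _ _ (f y / q y * q y)).
    by rewrite ltr_pM2l ?divr_gt0 ?f_gt0.
  by rewrite mulfVK ?gt_eqF.
move=> x.
pose g y := f y / f x.
have sa_g : forall y, sa g y < g y.
  move=> y; rewrite /g (_ : (fun y => f y / f x) = (fun y => (f x)^-1 * f y)); last first.
    by apply: funext => z; rewrite mulrC.
  rewrite sa_scale mulrC ltr_pM2r ?invr_gt0 //; exact: sa_f.
have hit : forall k y, hitp lam d x k y <= g y.
  elim=> [|k IH] y /=; first by rewrite divr_ge0 // ltW.
  case: eqP => [->|_]; first by rewrite /g divff // gt_eqF.
  apply: le_trans (ltW (sa_g y)); apply: sa_le => z; exact: IH.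
rewrite /return_prob; apply: (@le_lt_trans _ _ (sa g x)%:E).
  apply: ge_ereal_sup => _ [k _ <-]; rewrite lee_fin; apply: sa_le => z; exact: hit.
rewrite lte_fin; apply: lt_le_trans (sa_g x) _; by rewrite /g divff // gt_eqF.
Qed.

Fixpoint Sst (o : state I) (k : nat) (y : state I) : R :=
  match k with 0 => 0 | k'.+1 => if y == o then 0 else 1 + sa (Sst o k') y end.
Fixpoint Ast (V : state I -> R) (o : state I) (k : nat) (y : state I) : R :=
  match k with 0 => V y | k'.+1 => if y == o then 0 else sa (Ast V o k') y end.

Lemma nonposrec_crit (w : 'I_I -> R) (Q : R) : (forall i, 0 < w i) ->
  (forall x, \sum_i w i * d x i <= \sum_i w i * lam i) -> (forall x, q x <= Q) ->
  ~ ctmc_pos_recurrent lam d.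
Proof.
move=> w_gt0 Hdr HQ Hpr.
pose o : state I := [ffun => 0%N].
pose V (y : state I) := \sum_i w i * (y i)%:R.
pose W := \sum_i w i.
have V_ge0 : forall y, 0 <= V y.
  by move=> y; apply: sumr_ge0 => i _; rewrite mulr_ge0 // ltW.
have Vo : V o = 0 by apply: big1 => i _; rewrite ffunE mulr0.
have Vup : forall y i, V (Defs.up y i) = V y + w i.
  move=> y i; rewrite /V (eq_bigr (fun k => w k * (y k)%:R + w k * (k == i)%:R)); last first.
    by move=> k _; rewrite ffunE natrD mulrDr.
  rewrite big_split /=; congr (_ + _).
  rewrite (bigD1 i) //= eqxx mulr1 big1 ?addr0 // => k /negbTE ->; exact: mulr0.
have Vdown_le : forall y i, V (Defs.down y i) <= V y.
  move=> y i; apply: ler_sum => k _; rewrite ffunE; apply: ler_wpM2l; first exact: ltW.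
  by rewrite ler_nat leq_subr.
have dVdown : forall y i, d y i * V (Defs.down y i) = d y i * (V y - w i).
  move=> y i; case Hy: (y i) => [|yi]; first by rewrite d0 // !mul0r.
  have Hp : (0 < y i)%N by rewrite Hy.
  by have := Vup (Defs.down y i) i; rewrite up_down // => ->; rewrite addrK.
have wle : forall i, w i <= W.
  move=> i; rewrite /W (bigD1 i) //= lerDl; apply: sumr_ge0 => k _; exact: ltW.
have W_ge0 : 0 <= W by apply: sumr_ge0 => k _; exact: ltW.
have saV_eq : forall y, sa V y = V y + (\sum_i (w i * lam i - w i * d y i)) / q y.
  move=> y; rewrite /step_avg (eq_bigr (fun i => V y / q y * (lam i + d y i)
     + (w i * lam i - w i * d y i) / q y)); last first.
    by move=> i _; rewrite Vup [d y i / q y * _]mulrAC dVdown; ring.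
  rewrite big_split /= -mulr_sumr -mulr_suml -/(q y) mulfVK // gt_eqF //.
  exact: qtot_gt0.
have saV : forall y, V y <= sa V y.
  move=> y; rewrite saV_eq lerDl; apply: divr_ge0; last exact/ltW/qtot_gt0.
  by rewrite sumrB subr_ge0.
pose P k y := Sst o k.+1 y - Sst o k y.
have Smono : forall k y, Sst o k y <= Sst o k.+1 y.
  elim=> [|k IH] y /=.
    case: (y == o) => //; rewrite sa_const addr0; exact: ler01.
  case: (y == o) => //; rewrite lerD2l; apply: sa_le => z; exact: IH.
have P_ge0 : forall k y, 0 <= P k y by move=> k y; rewrite subr_ge0.
have Sstep : forall k y, y != o -> P k.+1 y = sa (P k) y.
  move=> k y Hy; rewrite /P /= (negbTE Hy).
  rewrite (_ : (fun z => Sst o k.+1 z - Sst o k z) =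
     (fun z => 1 * Sst o k.+1 z + (-1) * Sst o k z)); last by apply: funext => z; ring.
  by rewrite sa_lin; ring.
have A_ge : forall k y, V y <= Ast V o k y.
  elim=> [|k IH] y //=; case: eqP => [->|_]; first by rewrite Vo.
  apply: le_trans (saV y) _; apply: sa_le => z; exact: IH.
have key : forall k y, sa (fun z => (V z + W * k%:R) * P k z) y <= (V y + W * k.+1%:R) * sa (P k) y.
  move=> k y; rewrite -sa_scale; apply: sa_le_loc => i; apply: ler_wpM2r => //.
    by rewrite Vup -addrA lerD2l -natr1 mulrDr mulr1 addrC lerD2l.
  apply: lerD; first exact: Vdown_le.
  by apply: ler_wpM2l => //; rewrite ler_nat.
have A_le : forall k y, Ast V o k y <= (V y + W * k%:R) * P k y.
  elim=> [|k IH] y.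
    rewrite /= /P /=; case: eqP => [->|_]; first by rewrite Vo !mulr0.
    by rewrite sa_const !mulr0 !addr0 subr0 mulr1.
  rewrite [Ast _ _ _ _]/=; case: eqP => [->|/eqP Hy].
    by rewrite /P /= eqxx subrr mulr0.
  rewrite Sstep //; apply: le_trans (key k y); apply: sa_le => z; exact: IH.
have d_o : forall i, d o i = 0 by move=> i; apply: d0; rewrite ffunE.
have delta_gt0 : 0 < sa V o.
  rewrite saV_eq Vo add0r; apply: divr_gt0; last exact: qtot_gt0.
  rewrite (eq_bigr (fun i => w i * lam i)); last by move=> i _; rewrite d_o mulr0 subr0.
  by rewrite (bigD1 i0) //= ltr_pwDl ?mulr_gt0 // sumr_ge0 // => i _; rewrite mulr_ge0 // ltW.
have lowP : forall k, sa V o <= (W * k.+1%:R) * sa (P k) o.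
  move=> k; apply: le_trans (sa_le o (A_ge k)) _.
  apply: le_trans (sa_le o (A_le k)) _.
  by apply: le_trans (key k o) _; rewrite Vo add0r.
have tele : forall K, sa (Sst o K) o = \sum_(0 <= k < K) sa (P k) o.
  elim=> [|K IH]; first by rewrite big_geq // /= sa_const.
  rewrite big_nat_recr // -IH.
  rewrite (_ : Sst o K.+1 = (fun z => 1 * Sst o K z + 1 * P K z)); last first.
    by apply: funext => z; rewrite /P; ring.
  by rewrite sa_lin !mul1r.
have Q_gt0 : 0 < Q by apply: lt_le_trans (qtot_gt0 o) (HQ o).
have Hh : forall k y, Sst o k y / Q <= hitt lam d o k y.
  elim=> [|k IH] y /=; first by rewrite mul0r.
  case: eqP => _; first by rewrite mul0r.
  rewrite mulrDl mul1r; apply: lerD.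
    by rewrite lef_pV2 ?posrE ?qtot_gt0.
  rewrite mulrC -sa_scale; apply: sa_le => z; rewrite mulrC; exact: IH.
have [M HM] : exists M, forall k, (q o)^-1 + sa (hitt lam d o k) o <= M.
  have := Hpr o; rewrite /mean_return; set s := ereal_sup _ => Hs.
  have Hub : forall k, (((q o)^-1 + sa (hitt lam d o k) o)%:E <= s)%E.
    by move=> k; apply: ereal_sup_ubound; exists k.
  move: Hs Hub; case: s => [M| |] Hs Hub.
  - by exists M => k; rewrite -lee_fin.
  - by rewrite ltxx in Hs.
  - by have := Hub 0%N; rewrite leeNy_eq.
have SK : forall K, sa (Sst o K) o <= Q * M.
  move=> K; rewrite -ler_pdivrMl // -sa_scale.
  apply: le_trans (HM K); rewrite -[X in X <= _]add0r; apply: lerD.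
    by rewrite invr_ge0 ltW ?qtot_gt0.
  by apply: sa_le => z; rewrite mulrC; exact: Hh.
have W_gt0 : 0 < W by apply: lt_le_trans (w_gt0 i0) (wle i0).
apply: (@dvg_harmonic R); apply: nondecreasing_is_cvgn.
  apply: nondecreasing_series => n _ _; exact: harmonic_ge0.
exists (W / sa V o * (Q * M)) => _ [K _ <-].
rewrite /series /=.
have hk : forall k, (k.+1%:R)^-1 <= W / sa V o * sa (P k) o.
  move=> k; have h1 := lowP k.
  have hk1 : (0 : R) < k.+1%:R by rewrite ltr0n.
  rewrite -(@ler_pM2r _ (sa V o * k.+1%:R)) ?mulr_gt0 //.
  have -> : (k.+1%:R)^-1 * (sa V o * k.+1%:R) = sa V o by field; rewrite gt_eqF.
  have -> : W / sa V o * sa (P k) o * (sa V o * k.+1%:R) = W * k.+1%:R * sa (P k) o.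
    by field; rewrite gt_eqF.
  exact: h1.
apply: le_trans (_ : \sum_(0 <= k < K) W / sa V o * sa (P k) o <= _).
  by apply: ler_sum => k _; exact: hk.
rewrite -mulr_sumr -tele; apply: ler_wpM2l; last exact: SK.
by rewrite divr_ge0 // ltW.
Qed.
End CT.


Lemma LP_bound (R : realType) (I J : nat) (E : {set 'I_I * 'I_J})
  (lam : nat -> 'I_I -> R) (mu : nat -> 'I_I -> 'I_J -> R) (N : nat -> 'I_J -> nat)
  (lamL : 'I_I -> R) (nuL : 'I_J -> R) (muL : 'I_I -> 'I_J -> R)
  (xi : 'I_I -> 'I_J -> R) (n : nat) (p : 'I_I -> R) (w : 'I_I -> R) (u : 'I_J -> R)
  (i0 : 'I_I) (v : R) :
  (forall a b, connect (vadj E) a b) ->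
  (forall i j, (i, j) \in E -> 0 < mu n i j) ->
  CRP E lamL muL nuL xi -> (0 < n)%N -> (forall i, 0 < p i) ->
  (forall i, 0 < w i) -> (forall j, 0 < u j) ->
  (forall i j, (i, j) \in E -> w i * mu n i j = u j) ->
  is_vartheta E (lamhat lam lamL n) (mu n) (thetan E mu muL N nuL xi n) p v ->
  - (\sum_i w i * lam n i - \sum_j u j * (N n j)%:R) /
      (Num.sqrt n%:R * \sum_i w i * p i) <= v.
Proof.
move=> conn mu_gt0 [[_ [_ Hfeas]] _ _ Hxi1 _] n_gt0 p_gt0 w_gt0 u_gt0 wu [_ Hopt].
set sq : R := Num.sqrt n%:R.
have sq_gt0 : 0 < sq by rewrite sqrtr_gt0 ltr0n.
have sq2 : sq * sq = n%:R by rewrite -expr2 sqr_sqrtr // ler0n.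
have wp_gt0 : 0 < \sum_i w i * p i.
  by rewrite (bigD1 i0) //= ltr_pwDl ?mulr_gt0 // sumr_ge0 // => i _; rewrite mulr_ge0 // ltW.
set eps := - _ / _.
pose b i := lam n i + sq * eps * p i.
have Hbal : \sum_i w i * b i = \sum_j u j * (N n j)%:R.
  rewrite /b (eq_bigr (fun i => w i * lam n i + sq * eps * (w i * p i))); last by move=> i _; ring.
  rewrite big_split /= -mulr_sumr /eps; field; by rewrite !gt_eqF.
have [z [Hz1 Hz2]] := solve_tree (fun i j H => lt0r_neq0 (mu_gt0 i j H))
  (fun i => lt0r_neq0 (w_gt0 i)) (fun j => lt0r_neq0 (u_gt0 j)) wu conn i0 Hbal.
pose T i j := xi i j * nuL j * muL i j / mu n i j.
pose kap i j := if (i, j) \in E then (z i j - n%:R * T i j) / sq else 0.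
apply: (Hopt eps kap); split.
- by move=> i j /negbTE H; rewrite /kap H.
- move=> i.
  have -> : \sum_(j | (i, j) \in E) mu n i j * kap i j = (b i - n%:R * lamL i) / sq.
    rewrite -(Hz1 i) -Hfeas mulr_sumr -sumrB mulr_suml; apply: eq_bigr => j Hj.
    rewrite /kap Hj /= /T.
    have hm := mu_gt0 _ _ Hj.
    move: (mu n i j) (z i j) (xi i j) (nuL j) (muL i j) hm => a1 a2 a3 a4 a5 ha.
    by field; rewrite !lt0r_neq0.
  rewrite /lamhat /b le_eqVlt; apply/orP; left; apply/eqP.
  have F1 : forall a c s e pp : R, s != 0 -> (a - c) / s = (a + s * e * pp - c) / s - e * pp.
    by move=> a c s e pp hs; field.
  by apply: F1; rewrite lt0r_neq0.
- move=> j; rewrite /thetan /nuhat /muhat.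
  have -> : \sum_(i | (i, j) \in E) kap i j = ((N n j)%:R - n%:R * \sum_(i | (i, j) \in E) T i j) / sq.
    rewrite -(Hz2 j) mulr_sumr -sumrB mulr_suml; apply: eq_bigr => i Hi.
    by rewrite /kap Hi.
  have -> : \sum_(i | (i, j) \in E) (sq * (mu n i j - muL i j) / mu n i j) * (xi i j * nuL j)
       = sq * nuL j - sq * \sum_(i | (i, j) \in E) T i j.
    rewrite (eq_bigr (fun i => sq * (xi i j * nuL j) - sq * T i j)); last first.
      move=> i Hi; rewrite /T.
      have F3 : forall s m mL x nu : R, m != 0 ->
        s * (m - mL) / m * (x * nu) = s * (x * nu) - s * (x * nu * mL / m).
        by move=> s m mL x nu hm; field.
      by apply: F3; rewrite lt0r_neq0 // mu_gt0.
    by rewrite sumrB -!mulr_sumr -mulr_suml Hxi1 mul1r.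
  have F2 : forall N0 X s nu nn : R, s != 0 -> s * s = nn ->
     (N0 - nn * X) / s = s * (N0 / nn - nu) + (s * nu - s * X).
    by move=> N0 X s nu nn hs <-; field.
  exact: F2 (lt0r_neq0 sq_gt0) sq2.
Qed.

Lemma dep_facts (R : realType) (I J : nat) (E : {set 'I_I * 'I_J})
  (mun : 'I_I -> 'I_J -> R) (Nn : 'I_J -> nat) (z : state I -> 'I_I -> 'I_J -> nat) :
  (forall i j, (i, j) \in E -> 0 < mun i j) -> wc_policy E Nn z ->
  [/\ (forall x i, 0 <= dep_rate E mun z x i),
      (forall (x : state I) i, x i = 0%N -> dep_rate E mun z x i = 0) &
      (forall x i, dep_rate E mun z x i <= \sum_(j | (i, j) \in E) mun i j * (Nn j)%:R)].
Proof.
move=> mu_gt0 Hz; split.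
- move=> x i; apply: sumr_ge0 => j Hj; rewrite mulr_ge0 // ltW //; exact: mu_gt0.
- move=> x i Hx; apply: big1 => j Hj.
  case: (Hz x) => _ H2 _ _; have := H2 i; rewrite Hx leqn0 => /eqP.
  move/eqP; rewrite sum_nat_eq0 => /forallP /(_ j) /implyP /(_ isT) /eqP ->.
  by rewrite mulr0.
- move=> x i; apply: ler_sum => j Hj; apply: ler_wpM2l; first by rewrite ltW // mu_gt0.
  rewrite ler_nat; case: (Hz x) => _ _ H3 _; apply: leq_trans (H3 j).
  by rewrite (bigD1 i) //= leq_addr.
Qed.

Lemma drift_bound (R : realType) (I J : nat) (E : {set 'I_I * 'I_J})
  (mun : 'I_I -> 'I_J -> R) (Nn : 'I_J -> nat) (z : state I -> 'I_I -> 'I_J -> nat)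
  (w : 'I_I -> R) (u : 'I_J -> R) :
  wc_policy E Nn z -> (forall j, 0 <= u j) ->
  (forall i j, (i, j) \in E -> w i * mun i j = u j) ->
  forall x, \sum_i w i * dep_rate E mun z x i <= \sum_j u j * (Nn j)%:R.
Proof.
move=> Hz u_ge0 wu x.
rewrite /dep_rate (eq_bigr (fun i => \sum_j (if (i, j) \in E then u j * (z x i j)%:R else 0))); last first.
  move=> i _; rewrite mulr_sumr big_mkcond /=; apply: eq_bigr => j _.
  by case: ifP => H; rewrite ?mulr0 // mulrA wu.
rewrite exchange_big /=; apply: ler_sum => j _.
apply: (@le_trans _ _ (\sum_i u j * (z x i j)%:R)).
  apply: ler_sum => i _; case: ifP => _ //; by rewrite mulr_ge0.
rewrite -mulr_sumr; apply: ler_wpM2l => //.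
rewrite -natr_sum ler_nat; by case: (Hz x).
Qed.

Lemma term_bound (R : realType) (d t b : R) : 0 <= d -> 0 <= t -> 0 < b -> b <= 1 - t ->
  d / (1 - t) <= d + t / b * d.
Proof.
move=> hd ht hb hbt.
have h1t : 0 < 1 - t by apply: lt_le_trans hbt.
rewrite ler_pdivrMr //.
have he : 1 <= (1 - t) / b by rewrite ler_pdivlMr // mul1r.
have H : 0 <= t * d * ((1 - t) / b - 1) by rewrite mulr_ge0 ?mulr_ge0 // subr_ge0.
have -> : (d + t / b * d) * (1 - t) = d * (1 - t) + t * d * ((1 - t) / b).
  by field; rewrite gt_eqF.
move: H; set e := (1 - t) / b => H.
have Heq : t * d * (e - 1) = t * d * e - t * d by rewrite mulrBr mulr1.
lra.
Qed.

Theorem theorem6 (R : realType) (I J : nat) (E : {set 'I_I * 'I_J})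
  (lam : nat -> 'I_I -> R) (mu : nat -> 'I_I -> 'I_J -> R) (N : nat -> 'I_J -> nat)
  (lamL : 'I_I -> R) (nuL : 'I_J -> R) (muL : 'I_I -> 'I_J -> R)
  (xi : 'I_I -> 'I_J -> R) (n : nat) (p : 'I_I -> R) :
  is_tree E ->
  (forall m i, 0 < lam m i) ->
  (forall m i j, (i, j) \in E -> 0 < mu m i j) ->
  (forall m j, (0 < N m j)%N) ->
  (forall i, 0 < lamL i) -> (forall j, 0 < nuL j) ->
  (forall i j, (i, j) \in E -> 0 < muL i j) ->
  (forall i, (fun m => lam m i / m%:R) @ \oo --> lamL i) ->
  (forall j, (fun m => (N m j)%:R / m%:R) @ \oo --> nuL j) ->
  (forall i j, (i, j) \in E -> (fun m => mu m i j) @ \oo --> muL i j) ->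
  (forall i, cvg ((fun m => lamhat lam lamL m i) @ \oo)) ->
  (forall i j, (i, j) \in E -> cvg ((fun m => muhat mu muL m i j) @ \oo)) ->
  (forall j, cvg ((fun m => nuhat N nuL m j) @ \oo)) ->
  CRP E lamL muL nuL xi ->
  (0 < n)%N ->
  (forall i, 0 < p i) -> \sum_(i < I) p i = 1 ->
  forall v : R,
    is_vartheta E (lamhat lam lamL n) (mu n) (thetan E mu muL N nuL xi n) p v ->
    (v < 0 ->
       forall z, wc_policy E (N n) z ->
         ctmc_transient (lam n) (dep_rate E (mu n) z)) /\
    (v = 0 ->
       forall z, wc_policy E (N n) z ->
         ~ ctmc_pos_recurrent (lam n) (dep_rate E (mu n) z)).
Proof.
move=> [Hconn Hacyc] Hlam Hmu HN HlamL HnuL HmuL _ _ _ _ _ _ Hcrp Hn Hp Hpsum v Hv.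
case: (posnP I) => [I0|Ipos].
  by subst I; move: Hpsum; rewrite big_ord0 => /eqP; rewrite eq_sym oner_eq0.
pose i0 : 'I_I := Ordinal Ipos.
pose gf (a b : 'I_I + 'I_J) : R := match a, b with
  | inl i, inr j => mu n i j | inr j, inl i => (mu n i j)^-1 | _, _ => 1 end.
have esym : symmetric (vadj E) by case=> a [] b.
have eirr : forall a, ~~ vadj E a a by case.
have ginv : forall a b, vadj E a b -> gf a b * gf b a = 1.
  case=> a [] b //= H; [rewrite mulfV | rewrite mulVf] => //; exact: lt0r_neq0 (Hmu _ _ _ H).
have gpos : forall a b, vadj E a b -> 0 < gf a b.
  case=> a [] b //= H; rewrite ?invr_gt0; exact: Hmu.
have [Phi [Phi_gt0 HPhi]] := potential_exists esym eirr ginv gpos Hacyc Hconn (inl i0).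
pose w i := Phi (inl i); pose u j := Phi (inr j).
have wu : forall i j, (i, j) \in E -> w i * mu n i j = u j.
  by move=> i j H; rewrite /u (HPhi (inl i) (inr j) H).
have w_gt0 : forall i, 0 < w i by move=> i; exact: Phi_gt0.
have u_gt0 : forall j, 0 < u j by move=> j; exact: Phi_gt0.
have LPb := LP_bound i0 Hconn (Hmu n) Hcrp Hn Hp w_gt0 u_gt0 wu Hv.
set L := \sum_i w i * lam n i in LPb.
set U := \sum_j u j * (N n j)%:R in LPb.
have D_gt0 : 0 < Num.sqrt n%:R * \sum_i w i * p i.
  rewrite mulr_gt0 // ?sqrtr_gt0 ?ltr0n //.
  by rewrite (bigD1 i0) //= ltr_pwDl ?mulr_gt0 // sumr_ge0 // => i _; rewrite mulr_ge0 // ltW.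
have U_ge0 : 0 <= U by apply: sumr_ge0 => j _; rewrite mulr_ge0 // ltW.
have L_gt0 : 0 < L.
  by rewrite /L (bigD1 i0) //= ltr_pwDl ?mulr_gt0 // sumr_ge0 // => i _; rewrite mulr_ge0 // ltW.
split.
- move=> v_lt0 z Hz.
  have SL : U < L.
    have := le_lt_trans LPb v_lt0; rewrite pmulr_llt0 ?invr_gt0 // oppr_lt0 subr_gt0 //.
  have [d_ge0 d0 _] := dep_facts (Hmu n) Hz.
  have Hdr := drift_bound Hz (fun j => ltW (u_gt0 j)) wu.
  pose W := \sum_i w i.
  have W_gt0 : 0 < W.
    by rewrite /W (bigD1 i0) //= ltr_pwDl // sumr_ge0 // => i _; rewrite ltW.
  have wle : forall i, w i <= W.
    by move=> i; rewrite /W (bigD1 i) //= lerDl sumr_ge0 // => k _; rewrite ltW.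
  pose beta := (L + U) / (2 * L).
  have beta_gt0 : 0 < beta by rewrite divr_gt0 // ?mulr_gt0 //; lra.
  have beta_lt1 : beta < 1 by rewrite ltr_pdivrMr ?mulr_gt0 //; lra.
  pose s := (1 - beta) / W.
  have s_gt0 : 0 < s by rewrite divr_gt0 // subr_gt0.
  pose a i := 1 - s * w i.
  have a_ge : forall i, beta <= a i.
    move=> i; rewrite /a; have : s * w i <= s * W by rewrite ler_pM2l.
    have -> : s * W = 1 - beta by rewrite /s divfK // gt_eqF.
    lra.
  apply: (@transient_crit R I (lam n) (dep_rate E (mu n) z) (Hlam n) d_ge0 d0 i0 a).
    by move=> i; apply: lt_le_trans (a_ge i).
  move=> x.
  have Hterm : forall i, lam n i * a i + dep_rate E (mu n) z x i / a i <=
     (lam n i + dep_rate E (mu n) z x i) - s * (w i * lam n i)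
       + s / beta * (w i * dep_rate E (mu n) z x i).
    move=> i; have := @term_bound R (dep_rate E (mu n) z x i) (s * w i) beta (d_ge0 x i).
    move=> /(_ (mulr_ge0 (ltW s_gt0) (ltW (w_gt0 i))) beta_gt0 (a_ge i)).
    rewrite -/(a i) => H.
    have -> : lam n i + dep_rate E (mu n) z x i - s * (w i * lam n i) +
       s / beta * (w i * dep_rate E (mu n) z x i) =
       lam n i * a i + (dep_rate E (mu n) z x i + s * w i / beta * dep_rate E (mu n) z x i).
      by rewrite /a; field; exact: lt0r_neq0.
    by rewrite lerD2l.
  apply: le_lt_trans (ler_sum _ (fun i _ => Hterm i)) _.
  rewrite big_split /= sumrB -!mulr_sumr -/L -/(qtot _ _ x).
  have := Hdr x; set Y := \sum_i _ => HY.
  have : s / beta * Y <= s / beta * U by rewrite ler_pM2l // divr_gt0.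
  have : s / beta * U < s * L.
    rewrite -mulrA ltr_pM2l // ltr_pdivrMl // /beta.
    have -> : (L + U) / (2 * L) * L = (L + U) / 2.
      by field; exact: lt0r_neq0.
    lra.
  lra.
- move=> v0 z Hz; rewrite v0 in LPb.
  have SL : U <= L.
    by move: LPb; rewrite pmulr_lle0 ?invr_gt0 // oppr_le0 subr_ge0.
  have [d_ge0 d0 dle] := dep_facts (Hmu n) Hz.
  have Hdr := drift_bound Hz (fun j => ltW (u_gt0 j)) wu.
  apply: (@nonposrec_crit R I (lam n) (dep_rate E (mu n) z) (Hlam n) d_ge0 d0 i0 w
    (\sum_i (lam n i + \sum_(j | (i, j) \in E) mu n i j * (N n j)%:R))) => //.
    by move=> x; apply: le_trans (Hdr x) _; rewrite -/L.
  by move=> x; rewrite /qtot; apply: ler_sum => i _; rewrite lerD2l.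
Qed.
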